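(* Let $t_1, t_2 \in \mathsf{Topo}$, let $f$ be an embedding of $t_1$ in $t_2$, and let $q \in \mathsf{PIFOTree}(t_1)$. Then $q \preceq \widehat f(q)$.
   Context: Fix a set $\mathsf{Pkt}$ of packets and a totally ordered set $\mathsf{Rk}$ of ranks (a smaller rank is more favorable). PIFOs: for a set $S$, a PIFO over $S$ is a finite sequence of pairs $(s,r) \in S \times \mathsf{Rk}$ kept in insertion order; $\mathsf{PIFO}(S)$ is the set of these. $\mathsf{push}_{\mathsf{PIFO}}(p,s,r)$ appends $(s,r)$ to $p$. $\mathsf{pop}_{\mathsf{PIFO}}(p)$ is undefined if $p$ is empty; otherwise it removes the entry $(s,r)$ of $p$ with minimal rank (earliest-inserted among ties) and returns $(s,p')$ with $p'$ the rest. Topologies: $\mathsf{Topo}$ is the smallest set with $* \in \mathsf{Topo}$ and $\mathsf{Node}(\vec t) \in \mathsf{Topo}$ for every $n \in \mathbb{N}$, $\vec t \in \mathsf{Topo}^n$; $\vec t[i]$ is the $i$-th entry. PIFO trees: $\mathsf{Leaf}(p) \in \mathsf{PIFOTree}( * )$ for $p \in \mathsf{PIFO}(\mathsf{Pkt})$; $\mathsf{Internal}(\vec q, p) \in \mathsf{PIFOTree}(\mathsf{Node}(\vec t))$ whenever $\vec t \in \mathsf{Topo}^n$, $p \in \mathsf{PIFO}(\{1,\dots,n\})$, $\vec q[i] \in \mathsf{PIFOTree}(\vec t[i])$. $\vec q[q'/i]$ is $\vec q$ with $i$-th entry replaced by $q'$. pop (partial): $\mathsf{pop}(\mathsf{Leaf}(p))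 = (pkt,\mathsf{Leaf}(p'))$ if $\mathsf{pop}_{\mathsf{PIFO}}(p)=(pkt,p')$; $\mathsf{pop}(\mathsf{Internal}(\vec q,p)) = (pkt,\mathsf{Internal}(\vec q[q'/i],p'))$ if $\mathsf{pop}_{\mathsf{PIFO}}(p)=(i,p')$ and $\mathsf{pop}(\vec q[i]) = (pkt,q')$; undefined otherwise. Paths: $\mathsf{Path}( * ) = \mathsf{Rk}$; $\mathsf{Path}(\mathsf{Node}(\vec t))$ consists of $(i,r)::pt$ with $1\le i\le n$, $r\in\mathsf{Rk}$, $pt\in\mathsf{Path}(\vec t[i])$. push: $\mathsf{push}(\mathsf{Leaf}(p),pkt,r) = \mathsf{Leaf}(\mathsf{push}_{\mathsf{PIFO}}(p,pkt,r))$; $\mathsf{push}(\mathsf{Internal}(\vec q,p),pkt,(i,r)::pt) = \mathsf{Internal}(\vec q[\mathsf{push}(\vec q[i],pkt,pt)/i],\mathsf{push}_{\mathsf{PIFO}}(p,i,r))$. Simulation: a relation $R \subseteq \mathsf{PIFOTree}(t_1)\times\mathsf{PIFOTree}(t_2)$ is a simulation if for all $pkt$ and $q_1 \mathrel{R} q_2$: (1) if $\mathsf{pop}(q_1)$ is undefined so is $\mathsf{pop}(q_2)$; (2) if $\mathsf{pop}(q_1)=(pkt,q_1')$ then $\mathsf{pop}(q_2)=(pkt,q_2')$ with $q_1' \mathrel{R} q_2'$; (3) for every $pt_1\in\mathsf{Path}(t_1)$ there is $pt_2 \in \mathsf{Path}(t_2)$ with $\mathsf{push}(q_1,pkt,pt_1)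 \mathrel{R} \mathsf{push}(q_2,pkt,pt_2)$. $q_1 \preceq q_2$ means some simulation relates them. Addresses: $\mathsf{Addr}(t) \subseteq \mathbb{N}^*$ is the smallest set with $\epsilon \in \mathsf{Addr}(t)$ and $i\cdot\alpha \in \mathsf{Addr}(\mathsf{Node}(\vec t))$ for $1\le i\le n$, $\alpha \in \mathsf{Addr}(\vec t[i])$. Subtrees: $t/\epsilon = t$, $\mathsf{Node}(\vec t)/(i\cdot\alpha) = \vec t[i]/\alpha$. An embedding of $t_1$ in $t_2$ is an injective $f:\mathsf{Addr}(t_1)\to\mathsf{Addr}(t_2)$ with $f(\epsilon)=\epsilon$, $t_2/f(\alpha) = *$ whenever $t_1/\alpha = *$, and: $\alpha$ is a prefix of $\alpha'$ iff $f(\alpha)$ is a prefix of $f(\alpha')$. If $t_1 = *$ then $t_2 = *$; if $t_1 = \mathsf{Node}(\vec t_1)$ then for each $i$ the map $f_i$ defined by $f(i\cdot\alpha) = f(i)\cdot f_i(\alpha)$ is an embedding of $t_1/i$ in $t_2/f(i)$. Lifting $\widehat f:\mathsf{PIFOTree}(t_1)\to\mathsf{PIFOTree}(t_2)$, by recursion on $t_1$: if $t_1 = *$, $\widehat f(q) = q$. If $t_1 = \mathsf{Node}(\vec t_1)$ with $n$ children and $q = \mathsf{Internal}(\vec q,p)$, define for each address $\alpha$ of $t_2$ that is a prefix of some $f(i)$ a tree $\widehat f(q)_\alpha \in \mathsf{PIFOTree}(t_2/\alpha)$, from longer to shorter $\alpha$: if $\alpha = f(i)$, then $\widehat f(q)_\alpha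 = \widehat{f_i}(\vec q[i])$; otherwise $t_2/\alpha$ is a node with some $m$ children, and $\widehat f(q)_\alpha = \mathsf{Internal}(\vec q_\alpha, p_\alpha)$ where $\vec q_\alpha[j] = \widehat f(q)_{\alpha\cdot j}$ if $\alpha\cdot j$ is a prefix of some $f(i)$, and otherwise $\vec q_\alpha[j]$ is the tree of topology $t_2/(\alpha\cdot j)$ all of whose PIFOs are empty; and $p_\alpha$ is obtained from $p$ by replacing each entry $(i,r)$ with $(j,r)$ where $j$ is such that $\alpha\cdot j$ is a prefix of $f(i)$, deleting entries $(i,r)$ for which no such $j$ exists, and keeping the order of entries. Finally $\widehat f(q) = \widehat f(q)_\epsilon$. *)

(* Defs.v *)
From mathcomp Require Import all_boot all_order.
Set Implicit Arguments. Unset Strict Implicit. Unset Printing Implicit Defensive.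
Import Order.TTheory.

(* Conventions: child indices and address components are 0-based
   (paper's index i corresponds to i-1 here). *)

Inductive topo : Type := Star | Node of seq topo.

Section PIFO.
Context {d : Order.disp_t} {Rk : orderType d}.

(** PIFOs over S: finite sequence of (S * Rk) in insertion order. *)
Definition pifo (S : Type) := seq (S * Rk).

Definition pifo_push {S : Type} (p : pifo S) (s : S) (r : Rk) : pifo S :=
  rcons p (s, r).

(** Remove the entry of minimal rank, earliest-inserted among ties. *)
Definition pifo_pop {S : Type} (p : pifo S) : option (S * pifo S) :=
  match p with
  | [::] => None
  | e :: _ =>
      let k := find (fun e => all (fun e' => (e.2 <= e'.2)%O) p) p in
      Some ((nth e p k).1, take k p ++ drop k.+1 p)
  end.

Context {Pkt : Type}.

(** Untyped PIFO trees; [wt t q] says q is in PIFOTree(t). *)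
Inductive ptree : Type :=
  | Leaf of pifo Pkt
  | Internal of seq ptree & pifo nat.

Definition dflt_tree : ptree := Leaf [::].

Fixpoint wt (t : topo) (q : ptree) {struct t} : Prop :=
  match t, q with
  | Star, Leaf _ => True
  | Node ts, Internal qs p =>
      all (fun e => e.1 < size ts) p /\
      (fix go (ts : seq topo) (qs : seq ptree) : Prop :=
         match ts, qs with
         | [::], [::] => True
         | t' :: ts', q' :: qs' => wt t' q' /\ go ts' qs'
         | _, _ => False
         end) ts qs
  | _, _ => False
  end.

Fixpoint pop (q : ptree) : option (Pkt * ptree) :=
  match q with
  | Leaf p =>
      match pifo_pop p with
      | Some (x, p') => Some (x, Leaf p')
      | None => None
      end
  | Internal qs p =>
      match pifo_pop p with
      | Some (i, p') =>
          match nth None (map pop qs) i with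
          | Some (x, q') => Some (x, Internal (set_nth dflt_tree qs i q') p')
          | None => None
          end
      | None => None
      end
  end.

(** Paths: Path(t) is encoded as a pair (pt, r) : seq (nat * Rk) * Rk,
    where (i1,r1)::...::(ik,rk)::r is represented by ([::(i1,r1);...;(ik,rk)], r). *)
Fixpoint vpath (t : topo) (pt : seq (nat * Rk)) {struct pt} : Prop :=
  match pt with
  | [::] => t = Star
  | (i, _) :: pt' =>
      match t with
      | Node ts => i < size ts /\ vpath (nth Star ts i) pt'
      | Star => False
      end
  end.

Fixpoint push (q : ptree) (pkt : Pkt) (pt : seq (nat * Rk)) (r : Rk)
  {struct pt} : ptree :=
  match q, pt with
  | Leaf p, [::] => Leaf (pifo_push p pkt r)
  | Internal qs p, (i, ri) :: pt' =>
      Internal (set_nth dflt_tree qs i (push (nth dflt_tree qs i) pkt pt' r))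
               (pifo_push p i ri)
  | _, _ => q
  end.

Definition is_simulation (t1 t2 : topo) (R : ptree -> ptree -> Prop) : Prop :=
  forall q1 q2, R q1 q2 ->
  [/\ wt t1 q1, wt t2 q2,
      (pop q1 = None -> pop q2 = None),
      (forall pkt q1', pop q1 = Some (pkt, q1') ->
          exists q2', pop q2 = Some (pkt, q2') /\ R q1' q2')
    & (forall pkt (pt1 : seq (nat * Rk)) (r1 : Rk), vpath t1 pt1 ->
          exists (pt2 : seq (nat * Rk)) (r2 : Rk),
            vpath t2 pt2 /\ R (push q1 pkt pt1 r1) (push q2 pkt pt2 r2))].

Definition simulated (t1 t2 : topo) (q1 q2 : ptree) : Prop :=
  exists R, is_simulation t1 t2 R /\ R q1 q2.

End PIFO.

Fixpoint is_addr (t : topo) (a : seq nat) {struct a} : Prop :=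
  match a with
  | [::] => True
  | i :: a' =>
      match t with
      | Node ts => i < size ts /\ is_addr (nth Star ts i) a'
      | Star => False
      end
  end.

Fixpoint subtree (t : topo) (a : seq nat) {struct a} : topo :=
  match a with
  | [::] => t
  | i :: a' =>
      match t with
      | Node ts => subtree (nth Star ts i) a'
      | Star => Star
      end
  end.

(** Embeddings: f is represented as a total function on seq nat whose
    behaviour matters only on Addr(t1). *)
Definition embedding (t1 t2 : topo) (f : seq nat -> seq nat) : Prop :=
  [/\ f [::] = [::],
      (forall a, is_addr t1 a -> is_addr t2 (f a)),
      (forall a b, is_addr t1 a -> is_addr t1 b -> f a = f b -> a = b),
      (forall a, is_addr t1 a -> subtree t1 a = Star -> subtree t2 (f a) = Star)
    & (forall a b, is_addr t1 a -> is_addr t1 b ->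
         prefix a b = prefix (f a) (f b))].

Section Lift.
Context {d : Order.disp_t} {Rk : orderType d} {Pkt : Type}.
Notation ptree := (@ptree d Rk Pkt).

Fixpoint empty_tree (t : topo) : ptree :=
  match t with
  | Star => Leaf [::]
  | Node ts => Internal (map empty_tree ts) [::]
  end.

Definition child_toward (alpha fi : seq nat) : option nat :=
  if prefix alpha fi && (size alpha < size fi) then Some (nth 0 fi (size alpha))
  else None.

(** [build_tree fa L p u alpha]: the tree \hat f(q)_alpha of topology u = t2/alpha,
    where fa = [f(0); ...; f(n-1)], L = lifted children, p = root PIFO of q. *)
Fixpoint build_tree (fa : seq (seq nat)) (L : seq ptree) (p : pifo nat)
    (u : topo) (alpha : seq nat) {struct u} : ptree :=
  if alpha \in fa then nth (Leaf [::]) L (index alpha fa)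
  else match u with
  | Star => Leaf [::]
  | Node us =>
      Internal
        ((fix go (us : seq topo) (j : nat) : seq ptree :=
            match us with
            | [::] => [::]
            | u' :: us' =>
                (if has (prefix (rcons alpha j)) fa
                 then build_tree fa L p u' (rcons alpha j)
                 else empty_tree u') :: go us' j.+1
            end) us 0)
        (pmap (fun e : nat * Rk =>
                 match child_toward alpha (nth [::] fa e.1) with
                 | Some j => Some (j, e.2)
                 | None => None
                 end) p)
  end.

Fixpoint lift_tree (t1 t2 : topo) (f : seq nat -> seq nat) (q : ptree) {struct t1}
  : ptree :=
  match t1, q with
  | Node ts, Internal qs p =>
      let fa := mkseq (fun i => f [:: i]) (size ts) in
      let L :=
        (fix go (ts : seq topo) (qs : seq ptree) (i : nat) : seq ptree :=
           match ts, qs with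
           | t :: ts', q' :: qs' =>
               lift_tree t (subtree t2 (f [:: i]))
                    (fun a => drop (size (f [:: i])) (f (i :: a))) q'
               :: go ts' qs' i.+1
           | _, _ => [::]
           end) ts qs 0 in
      build_tree fa L p t2 [::]
  | _, _ => q
  end.

End Lift.

(* Main.v *)
Require Import Defs.
From mathcomp Require Import all_boot all_order.
Set Implicit Arguments. Unset Strict Implicit. Unset Printing Implicit Defensive.
Import Order.TTheory.

Definition topo_ind' (P : topo -> Prop) (HS : P Star)
  (HN : forall ts, (forall k, k < size ts -> P (nth Star ts k)) -> P (Node ts)) :
  forall t, P t :=
  fix F t := match t with
  | Star => HS
  | Node ts => HN ts
      ((fix go (ts : seq topo) : forall k, k < size ts -> P (nth Star ts k) :=
         match ts with
         | [::] => fun k (H : k < 0) => ltac:(exfalso; rewrite ltn0 in H; discriminate H)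
         | t' :: ts' => fun k => match k with
                | 0 => fun _ => F t'
                | k'.+1 => fun H => go ts' k' H end
         end) ts)
  end.

Lemma prefix_dropE (s x : seq nat) : prefix s x -> x = s ++ drop (size s) x.
Proof. by case/prefixP=> y ->; rewrite drop_size_cat. Qed.

Lemma is_addr_cat t a b : is_addr t (a ++ b) <-> is_addr t a /\ is_addr (subtree t a) b.
Proof.
elim: a t => [|i a IH] t /=; first by split => // [[]].
case: t => [|ts] /=; first by split => // [[]].
have := IH (nth Star ts i); tauto.
Qed.

Lemma subtree_cat t a b : subtree t (a ++ b) = subtree (subtree t a) b.
Proof. elim: a t => [|i a IH] t //=; case: t => [|ts] //=; by case: (b) => //= ? ?; case: (a). Qed.

Lemma prefix_rconsE (a x : seq nat) j :
  prefix (rcons a j) x = [&& prefix a x, size a < size x & nth 0 x (size a) == j].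
Proof.
elim: a x => [|i a IH] [|y x] //=.
  by rewrite prefix0s andbT eq_sym.
by rewrite IH; case: (i == y).
Qed.

Lemma prefix_size (a x : seq nat) : prefix a x -> size a <= size x.
Proof. by case/prefixP=> y ->; rewrite size_cat leq_addr. Qed.

Lemma prefix_strict (a x : seq nat) : prefix a x -> a != x ->
  x = a ++ nth 0 x (size a) :: drop (size a).+1 x.
Proof.
move=> /prefixP [y ->] ne; case: y ne => [|c y]; first by rewrite cats0 eqxx.
by move=> _; rewrite nth_cat ltnn subnn /= drop_cat ltnNge leqnSn /= subSn // subnn /= drop0.
Qed.

Section P.
Context {d : Order.disp_t} {Rk : orderType d}.

Lemma pifo_pop_split {S : Type} (pre post : seq (S * Rk)) e :
  all (fun x => (e.2 < x.2)%O) pre -> all (fun x => (e.2 <= x.2)%O) post ->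
  pifo_pop (pre ++ e :: post) = Some (e.1, pre ++ post).
Proof.
move=> Hpre Hpost.
have Hfind : find (fun x => all (fun y => (x.2 <= y.2)%O) (pre ++ e :: post)) (pre ++ e :: post) = size pre.
  rewrite find_cat.
  have -> : has (fun x => all (fun y => (x.2 <= y.2)%O) (pre ++ e :: post)) pre = false.
    apply/negbTE; rewrite -all_predC; apply: sub_all Hpre => x /= Hx.
    by rewrite all_cat /= andbCA lt_geF.
  rewrite /= all_cat /= lexx /=.
  have -> : all (fun y => (e.2 <= y.2)%O) pre.
    by apply: sub_all Hpre => x /ltW.
  by rewrite Hpost addn0.
case E: (pre ++ e :: post) => [|e0 s]; first by move/(congr1 size): E; rewrite size_cat addnS.
rewrite /pifo_pop -E Hfind nth_cat ltnn subnn /= take_size_cat //.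
by rewrite drop_cat ltnNge leqnSn /= subSn // subnn /= drop0.
Qed.

Lemma pifo_split_ex {S : Type} (p : seq (S * Rk)) : p <> [::] ->
  exists pre e post, p = pre ++ e :: post /\
    all (fun x => (e.2 < x.2)%O) pre /\ all (fun x => (e.2 <= x.2)%O) post.
Proof.
elim: p => [//|a p IH] _.
case: p IH => [|b p] IH; first by exists [::], a, [::].
have [pre [e [post [E [H1 H2]]]]] := IH ltac:(by []).
case: (leP a.2 e.2) => Hae.
  exists [::], a, (b :: p); split => //; split => //.
  rewrite E all_cat /=; apply/andP; split.
    by apply: sub_all H1 => x /ltW; exact: le_trans.
  by rewrite Hae /=; apply: sub_all H2 => x; exact: le_trans.
by exists (a :: pre), e, post; rewrite E /= Hae H1.
Qed.

Lemma pifo_popP {S : Type} (p : seq (S * Rk)) s p' :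
  pifo_pop p = Some (s, p') ->
  exists pre e post, [/\ p = pre ++ e :: post,
    all (fun x => (e.2 < x.2)%O) pre, all (fun x => (e.2 <= x.2)%O) post,
    s = e.1 & p' = pre ++ post].
Proof.
case: p => [//|a p0] H.
have [pre [e [post [E [H1 H2]]]]] := pifo_split_ex (p := a :: p0) ltac:(by []).
move: H; rewrite E pifo_pop_split // => -[<- <-].
by exists pre, e, post.
Qed.

Lemma pifo_pop_none {S : Type} (p : seq (S * Rk)) : pifo_pop p = None -> p = [::].
Proof. by case: p. Qed.

Lemma all_pmap_rank {S T : Type} (g : S * Rk -> option (T * Rk)) (P : Rk -> bool) s :
  (forall x y, g x = Some y -> y.2 = x.2) ->
  all (fun x => P x.2) s -> all (fun y => P y.2) (pmap g s).
Proof.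
move=> Hg; elim: s => //= x s IH /andP[Px Ps].
case E: (g x) => [y|] /=; last exact: IH.
by rewrite (Hg _ _ E) Px IH.
Qed.

Lemma pifo_pop_pmap {S T : Type} (g : S * Rk -> option (T * Rk)) pre e post e' :
  (forall x y, g x = Some y -> y.2 = x.2) -> g e = Some e' ->
  all (fun x => (e.2 < x.2)%O) pre -> all (fun x => (e.2 <= x.2)%O) post ->
  pifo_pop (pmap g (pre ++ e :: post)) = Some (e'.1, pmap g (pre ++ post)).
Proof.
move=> Hg He H1 H2; rewrite !pmap_cat /= He pifo_pop_split //.
  by rewrite (Hg _ _ He); apply: all_pmap_rank.
by rewrite (Hg _ _ He); apply: all_pmap_rank.
Qed.

End P.

Section C.
Context {d : Order.disp_t} {Rk : orderType d} {Pkt : Type}.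
Notation ptree := (@ptree d Rk Pkt).

Fixpoint wts (ts : seq topo) (qs : seq ptree) : Prop :=
  match ts, qs with
  | [::], [::] => True
  | t' :: ts', q' :: qs' => wt t' q' /\ wts ts' qs'
  | _, _ => False
  end.

Lemma wt_node ts qs (p : pifo nat) :
  wt (Node ts) (Internal qs p) = (all (fun e => e.1 < size ts) p /\ wts ts qs).
Proof. reflexivity. Qed.

Lemma wtsP ts qs : wts ts qs <-> size ts = size qs /\
  forall k, k < size ts -> wt (nth Star ts k) (nth dflt_tree qs k).
Proof.
elim: ts qs => [|t ts IH] [|q qs] /=; try by split => // -[].
split.
  by case=> H1 /IH [E H2]; split; [rewrite E | move=> [|k] //= /H2].
case=> [[E] H]; split; first exact: (H 0).
by apply/IH; split => // k Hk; apply: (H k.+1).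
Qed.

Definition mk_children (F : topo -> nat -> ptree) :=
  fix go (us : seq topo) (j : nat) : seq ptree :=
  match us with
  | [::] => [::]
  | u' :: us' => F u' j :: go us' j.+1
  end.

Lemma size_mk_children F us j : size (mk_children F us j) = size us.
Proof. by elim: us j => //= u us IH j; rewrite IH. Qed.

Lemma nth_mk_children F us j k : k < size us ->
  nth dflt_tree (mk_children F us j) k = F (nth Star us k) (j + k).
Proof.
elim: us j k => [|u us IH] j [|k] //=; first by rewrite addn0.
by move=> Hk; rewrite IH // addnS.
Qed.

Definition gmap (alpha : seq nat) (fa : seq (seq nat)) (e : nat * Rk) : option (nat * Rk) :=
  match child_toward alpha (nth [::] fa e.1) with
  | Some j => Some (j, e.2)
  | None => None
  end.

Lemma build_treeE (fa : seq (seq nat)) (L : seq ptree) (p : pifo nat) u alpha :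
  build_tree fa L p u alpha =
  if alpha \in fa then nth dflt_tree L (index alpha fa)
  else match u with
  | Star => Leaf [::]
  | Node us => Internal
      (mk_children (fun u' j => if has (prefix (rcons alpha j)) fa
          then build_tree fa L p u' (rcons alpha j) else empty_tree u') us 0)
      (pmap (gmap alpha fa) p)
  end.
Proof. case: u => [|us]; reflexivity. Qed.

Definition lifts (t2 : topo) (f : seq nat -> seq nat) :=
  fix go (ts : seq topo) (qs : seq ptree) (i : nat) : seq ptree :=
  match ts, qs with
  | t :: ts', q' :: qs' =>
      lift_tree t (subtree t2 (f [:: i]))
           (fun a => drop (size (f [:: i])) (f (i :: a))) q'
      :: go ts' qs' i.+1
  | _, _ => [::]
  end.

Lemma lift_node t2 f ts qs (p : pifo nat) :
  lift_tree (Node ts) t2 f (Internal qs p) =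
  build_tree (mkseq (fun i => f [:: i]) (size ts)) (lifts t2 f ts qs 0) p t2 [::].
Proof. reflexivity. Qed.

Lemma size_lifts t2 f ts qs n : size (lifts t2 f ts qs n) = minn (size ts) (size qs).
Proof.
elim: ts qs n => [|t ts IH] [|q qs] n //=; by rewrite IH minnSS.
Qed.

Lemma nth_lifts t2 f ts qs n k : k < size ts -> k < size qs ->
  nth dflt_tree (lifts t2 f ts qs n) k =
  lift_tree (nth Star ts k) (subtree t2 (f [:: n + k]))
    (fun a => drop (size (f [:: n + k])) (f ((n + k) :: a))) (nth dflt_tree qs k).
Proof.
elim: ts qs n k => [|t ts IH] [|q qs] n [|k] //=; first by rewrite addn0.
by move=> H1 H2; rewrite IH // addnS.
Qed.

Lemma wt_empty u : wt u (empty_tree u : ptree).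
Proof.
elim/topo_ind': u => [//|us IH] /=; split => //.
apply/wtsP; rewrite size_map; split => // k Hk.
by rewrite (nth_map Star) //; apply: IH.
Qed.

Lemma subtree_star a : subtree Star a = Star.
Proof. by case: a. Qed.

End C.

Lemma drop_rcons_prefix (alpha x : seq nat) k : prefix (rcons alpha k) x ->
  drop (size alpha) x = k :: drop (size alpha).+1 x.
Proof.
rewrite prefix_rconsE => /and3P [_ Hs /eqP Hk].
by rewrite (drop_nth 0 Hs) Hk.
Qed.

Lemma prefix_neq_rcons (alpha x : seq nat) : prefix alpha x -> alpha != x ->
  prefix (rcons alpha (nth 0 x (size alpha))) x.
Proof.
move=> Hp Hne; rewrite prefix_rconsE Hp eqxx andbT /=.
rewrite ltn_neqAle (prefix_size Hp) andbT; apply: contra Hne => /eqP Hs.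
by move: Hp; rewrite prefixE Hs take_size eq_sym.
Qed.

Lemma filter_sub {T : Type} (P Q : pred T) s : (forall x, Q x -> P x) ->
  filter Q (filter P s) = filter Q s.
Proof.
move=> H; elim: s => //= x s IH; case: (boolP (P x)) => Px /=; rewrite IH //.
by case: (boolP (Q x)) => // /H; rewrite (negbTE Px).
Qed.

Lemma pmap_filter_irr {S T : Type} (P : pred S) (g : S -> option T) s :
  (forall x, ~~ P x -> g x = None) -> pmap g (filter P s) = pmap g s.
Proof.
move=> H; elim: s => //= x s IH; case: (boolP (P x)) => Px /=; rewrite IH //.
by rewrite H.
Qed.

Lemma all_pmap {S T : Type} (P : pred T) (g : S -> option T) s :
  (forall x y, g x = Some y -> P y) -> all P (pmap g s).
Proof.
move=> H; elim: s => //= x s IH; case E: (g x) => [y|] //=.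
by rewrite (H _ _ E) IH.
Qed.

Section D.
Context {d : Order.disp_t} {Rk : orderType d} {Pkt : Type}.
Notation ptree := (@ptree d Rk Pkt).

Lemma mk_children_ext (F F' : topo -> nat -> ptree) us :
  (forall k, k < size us -> F (nth Star us k) k = F' (nth Star us k) k) ->
  mk_children F us 0 = mk_children F' us 0.
Proof.
move=> H; apply: (@eq_from_nth _ dflt_tree); rewrite !size_mk_children // => k Hk.
by rewrite !nth_mk_children // H.
Qed.

Lemma set_nth_mk (F F' : topo -> nat -> ptree) us j X :
  j < size us -> X = F' (nth Star us j) j ->
  (forall k, k < size us -> k != j -> F (nth Star us k) k = F' (nth Star us k) k) ->
  set_nth dflt_tree (mk_children F us 0) j X = mk_children F' us 0.
Proof.
move=> Hj HX H; apply: (@eq_from_nth _ dflt_tree).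
  by rewrite size_set_nth !size_mk_children; apply/maxn_idPr.
rewrite size_set_nth size_mk_children (maxn_idPr Hj) => k Hk.
rewrite nth_set_nth /= !nth_mk_children //.
by case: eqP => [->|/eqP ne]; [rewrite HX | rewrite H].
Qed.

Lemma gmap_rank alpha fa (x y : nat * Rk) : gmap alpha fa x = Some y -> y.2 = x.2.
Proof. by rewrite /gmap; case: child_toward => // j [<-]. Qed.

Lemma gmapE alpha fa (x : nat * Rk) j :
  prefix (rcons alpha j) (nth [::] fa x.1) -> gmap alpha fa x = Some (j, x.2).
Proof.
rewrite prefix_rconsE /gmap /child_toward => /and3P [-> -> /eqP ->] //.
Qed.

Lemma gmap_some alpha fa (x : nat * Rk) y : gmap alpha fa x = Some y ->
  prefix (rcons alpha y.1) (nth [::] fa x.1).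
Proof.
rewrite /gmap /child_toward; case: ifP => // /andP [H1 H2] [<-] /=.
by rewrite prefix_rconsE H1 H2 eqxx.
Qed.

Lemma BT_irr (fa : seq (seq nat)) (L L' : seq ptree) (p p' : pifo nat) u beta :
  (forall k, prefix beta (nth [::] fa k) -> nth dflt_tree L k = nth dflt_tree L' k) ->
  filter (fun e => prefix beta (nth [::] fa e.1)) p =
  filter (fun e => prefix beta (nth [::] fa e.1)) p' ->
  build_tree fa L p u beta = build_tree fa L' p' u beta.
Proof.
elim/topo_ind': u beta => [|us IH] beta HL Hp; rewrite !build_treeE.
  case: ifP => // Hin; apply: HL; rewrite nth_index //; exact: prefix_refl.
case: ifP => Hin.
  apply: HL; rewrite nth_index //; exact: prefix_refl.
have Hg : forall e : nat * Rk, ~~ prefix beta (nth [::] fa e.1) -> gmap beta fa e = None.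
  move=> e He; case E: (gmap beta fa e) => [y|] //.
  by move: He (gmap_some E); rewrite prefix_rconsE => /negbTE ->.
rewrite -(pmap_filter_irr p Hg) Hp (pmap_filter_irr p' Hg).
congr Internal; apply: mk_children_ext => k Hk.
case: ifP => // _; apply: IH => //.
  by move=> m Hm; apply: HL; move: Hm; rewrite prefix_rconsE => /andP[].
have HQ : forall e : nat * Rk, prefix (rcons beta k) (nth [::] fa e.1) -> prefix beta (nth [::] fa e.1).
  by move=> e; rewrite prefix_rconsE => /andP[].
by rewrite -(filter_sub p HQ) Hp (filter_sub p' HQ).
Qed.

Lemma BT_wt (fa : seq (seq nat)) (L : seq ptree) (p : pifo nat) u alpha :
  (forall k, k < size fa -> prefix alpha (nth [::] fa k) ->
     is_addr u (drop (size alpha) (nth [::] fa k)) /\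
     wt (subtree u (drop (size alpha) (nth [::] fa k))) (nth dflt_tree L k)) ->
  wt u (build_tree fa L p u alpha).
Proof.
elim/topo_ind': u alpha => [|us IH] alpha Hw; rewrite build_treeE.
  case: ifP => // Hin.
  have := Hw (index alpha fa); rewrite index_mem Hin nth_index // => /(_ isT (prefix_refl _)).
  by rewrite drop_size => -[].
case: ifP => Hin.
  have := Hw (index alpha fa); rewrite index_mem Hin nth_index // => /(_ isT (prefix_refl _)).
  by rewrite drop_size => -[].
rewrite wt_node; split.
  apply: all_pmap => x y /gmap_some Hpre.
  move: (Hpre); rewrite prefix_rconsE => /and3P [H1 H2 _].
  have Hk : x.1 < size fa.
    by rewrite ltnNge; apply/negP => /(nth_default [::]) E; move: H2; rewrite E.
  have [Ha _] := Hw _ Hk H1.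
  by move: Ha; rewrite (drop_rcons_prefix Hpre) /= => -[].
apply/wtsP; rewrite size_mk_children; split => // k Hk.
rewrite nth_mk_children // add0n; case: ifP => _; last exact: wt_empty.
apply: IH => // m Hm Hpre.
have Hpre' : prefix alpha (nth [::] fa m) by move: Hpre; rewrite prefix_rconsE => /andP[].
have := Hw m Hm Hpre'; rewrite (drop_rcons_prefix Hpre) size_rcons /= => -[[_ ?] ?].
by split.
Qed.

Lemma BT_none (fa : seq (seq nat)) (L : seq ptree) u alpha :
  alpha \notin fa -> pop (build_tree fa L [::] u alpha) = None.
Proof. by move=> Hin; rewrite build_treeE (negbTE Hin); case: u. Qed.

End D.

Section E.
Context {d : Order.disp_t} {Rk : orderType d} {Pkt : Type}.
Notation ptree := (@ptree d Rk Pkt).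

Lemma BT_pop (fa : seq (seq nat)) (L : seq ptree) (p p' : pifo nat) i u alpha :
  i < size fa ->
  (forall k, k < size fa -> prefix (nth [::] fa k) (nth [::] fa i) -> k = i) ->
  pifo_pop p = Some (i, p') ->
  prefix alpha (nth [::] fa i) -> is_addr u (drop (size alpha) (nth [::] fa i)) ->
  pop (build_tree fa L p u alpha) =
  match pop (nth dflt_tree L i) with
  | Some (x, l') => Some (x, build_tree fa (set_nth dflt_tree L i l') p' u alpha)
  | None => None
  end.
Proof.
move=> Hi Hanti Hpop; have [pre [e [post [Ep H1 H2 Ei Ep']]]] := pifo_popP Hpop.
rewrite Ep Ep'.
have Hincase : forall u alpha, alpha \in fa -> prefix alpha (nth [::] fa i) ->
  pop (nth dflt_tree L (index alpha fa)) =
  match pop (nth dflt_tree L i) with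
  | Some (x, l') => Some (x, build_tree fa (set_nth dflt_tree L i l') (pre ++ post) u alpha)
  | None => None
  end.
  move=> u0 a0 Hin Hpre.
  have Hk : index a0 fa = i by apply: Hanti; [rewrite index_mem | rewrite nth_index].
  rewrite Hk; case: pop => [[x l']|] //.
  by rewrite build_treeE Hin Hk nth_set_nth /= eqxx.
elim/topo_ind': u alpha => [|us IH] alpha Hpre Ha; rewrite build_treeE; case: ifP => Hin;
  try exact: Hincase.
  have Hne : alpha != nth [::] fa i by apply: contraFN Hin => /eqP ->; rewrite mem_nth.
  by move: Ha; rewrite (drop_rcons_prefix (prefix_neq_rcons Hpre Hne)).
have Hne : alpha != nth [::] fa i by apply: contraFN Hin => /eqP ->; rewrite mem_nth.
set j := nth 0 (nth [::] fa i) (size alpha).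
have Hr : prefix (rcons alpha j) (nth [::] fa i) by exact: prefix_neq_rcons.
move: Ha; rewrite (drop_rcons_prefix Hr) /= => -[Hj Ha].
have Hg : gmap alpha fa e = Some (j, e.2) by apply: gmapE; rewrite -Ei.
have Hh : has (prefix (rcons alpha j)) fa.
  by apply/hasP; exists (nth [::] fa i); [rewrite mem_nth | ].
simpl pop; rewrite (pifo_pop_pmap (@gmap_rank _ _ alpha fa) Hg H1 H2).
cbv iota beta.
rewrite (nth_map dflt_tree) ?size_mk_children // nth_mk_children // add0n Hh.
rewrite (IH j Hj (rcons alpha j) Hr); last by rewrite size_rcons.
case: (pop (nth dflt_tree L i)) => [[x l']|] //.
transitivity (Some (x, build_tree fa (set_nth dflt_tree L i l') (pre ++ post) (Node us) alpha)); last reflexivity.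
rewrite [in RHS]build_treeE Hin; congr (Some (x, Internal _ _)).
apply: set_nth_mk => //; first by rewrite Hh.
move=> k Hk nek; case: ifP => // _; apply: BT_irr.
  move=> m Hm; rewrite nth_set_nth /=; case: eqP => // Emi.
  by move: Hm nek; rewrite Emi prefix_rconsE => /and3P [_ _ /eqP Ek]; rewrite -Ek /j eqxx.
rewrite !filter_cat /=; case: ifP => // Hpe.
by move: Hpe nek; rewrite -Ei prefix_rconsE => /and3P [_ _ /eqP Ek]; rewrite -Ek /j eqxx.
Qed.

Lemma BT_push (fa : seq (seq nat)) (L : seq ptree) (p : pifo nat) i (r : Rk) pkt pt r0 u alpha :
  i < size fa ->
  (forall k, k < size fa -> prefix (nth [::] fa k) (nth [::] fa i) -> k = i) ->
  prefix alpha (nth [::] fa i) -> is_addr u (drop (size alpha) (nth [::] fa i)) ->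
  push (build_tree fa L p u alpha) pkt
       ([seq (c, r) | c <- drop (size alpha) (nth [::] fa i)] ++ pt) r0 =
  build_tree fa (set_nth dflt_tree L i (push (nth dflt_tree L i) pkt pt r0))
             (rcons p (i, r)) u alpha.
Proof.
move=> Hi Hanti.
have Hincase : forall u alpha, alpha \in fa -> prefix alpha (nth [::] fa i) ->
  push (nth dflt_tree L (index alpha fa)) pkt
       ([seq (c, r) | c <- drop (size alpha) (nth [::] fa i)] ++ pt) r0 =
  build_tree fa (set_nth dflt_tree L i (push (nth dflt_tree L i) pkt pt r0))
             (rcons p (i, r)) u alpha.
  move=> u0 a0 Hin Hpre.
  have Hk : index a0 fa = i by apply: Hanti; [rewrite index_mem | rewrite nth_index].
  have Ea : nth [::] fa i = a0 by rewrite -Hk nth_index.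
  by rewrite Hk Ea drop_size /= build_treeE Hin Hk nth_set_nth /= eqxx.
elim/topo_ind': u alpha => [|us IH] alpha Hpre Ha; rewrite build_treeE; case: ifP => Hin;
  try exact: Hincase.
  have Hne : alpha != nth [::] fa i by apply: contraFN Hin => /eqP ->; rewrite mem_nth.
  by move: Ha; rewrite (drop_rcons_prefix (prefix_neq_rcons Hpre Hne)).
have Hne : alpha != nth [::] fa i by apply: contraFN Hin => /eqP ->; rewrite mem_nth.
set j := nth 0 (nth [::] fa i) (size alpha).
have Hr : prefix (rcons alpha j) (nth [::] fa i) by exact: prefix_neq_rcons.
rewrite (drop_rcons_prefix Hr) /= in Ha; case: Ha => Hj Ha.
rewrite (drop_rcons_prefix Hr) map_cons cat_cons; simpl push.
have Hg : gmap alpha fa (i, r) = Some (j, r) by apply: gmapE.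
have Hh : has (prefix (rcons alpha j)) fa.
  by apply/hasP; exists (nth [::] fa i); [rewrite mem_nth | ].
rewrite nth_mk_children // add0n Hh.
have := IH j Hj (rcons alpha j) Hr; rewrite size_rcons => /(_ Ha) ->.
rewrite [in RHS]build_treeE Hin -cats1 pmap_cat /= Hg cats1.
congr Internal.
apply: set_nth_mk => //; first by rewrite Hh.
move=> k Hk nek; case: ifP => // _; apply: BT_irr.
  move=> m Hm; rewrite nth_set_nth /=; case: eqP => // Emi.
  by move: Hm nek; rewrite Emi prefix_rconsE => /and3P [_ _ /eqP Ek]; rewrite -Ek /j eqxx.
rewrite filter_rcons /=; case: ifP => // Hpe.
by move: Hpe nek; rewrite prefix_rconsE => /and3P [_ _ /eqP Ek]; rewrite -Ek /j eqxx.
by rewrite /pifo_push -cats1.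
Qed.

End E.

Lemma sub_emb ts t2 f i : embedding (Node ts) t2 f -> i < size ts ->
  embedding (nth Star ts i) (subtree t2 (f [:: i]))
            (fun a => drop (size (f [:: i])) (f (i :: a))).
Proof.
case=> H0 Ha Hinj Hleaf Hpre Hi.
have key : forall a, is_addr (nth Star ts i) a ->
    f (i :: a) = f [:: i] ++ drop (size (f [:: i])) (f (i :: a)).
  move=> a Hia; apply: prefix_dropE; rewrite -Hpre //=.
  by rewrite eqxx prefix0s.
split.
- by rewrite /= drop_size.
- move=> a Hia; have := Ha (i :: a) (conj Hi Hia).
  by rewrite {1}(key a Hia) => /is_addr_cat [_ ?].
- move=> a b Hia Hib E.
  have : f (i :: a) = f (i :: b) by rewrite (key a Hia) (key b Hib) E.
  by move/(Hinj (i :: a) (i :: b) (conj Hi Hia) (conj Hi Hib)) => [].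
- move=> a Hia Hs; rewrite -subtree_cat -key //.
  by apply: Hleaf => //=.
- move=> a b Hia Hib.
  have := Hpre (i :: a) (i :: b) (conj Hi Hia) (conj Hi Hib).
  rewrite prefix_cons eqxx /= => ->.
  by rewrite {1}(key a Hia) {1}(key b Hib) prefix_catr // eqxx.
Qed.

Lemma vpath_cat {d : Order.disp_t} {Rk : orderType d} t a (r : Rk) pt :
  is_addr t a -> vpath (subtree t a) pt -> vpath t ([seq (c, r) | c <- a] ++ pt).
Proof.
elim: a t => [|c a IH] t //=; case: t => [//|ts] [Hc Ha] Hv.
by split => //; apply: IH.
Qed.

Section F.
Context {d : Order.disp_t} {Rk : orderType d} {Pkt : Type}.
Notation ptree := (@ptree d Rk Pkt).

Lemma wt_pop t (q : ptree) x q' : wt t q -> pop q = Some (x, q') -> wt t q'.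
Proof.
elim/topo_ind': t q x q' => [|ts IH] [p|qs p] x q' //=.
  by case: pifo_pop => [[? ?]|] // _ [_ <-].
move=> [Hp Hqs]; case E: (pifo_pop p) => [[i p']|] //.
have [pre [e [post [Ep H1 H2 Ei Ep']]]] := pifo_popP E.
have /wtsP [Hsz Hch] := Hqs.
have Hi : i < size ts by move: Hp; rewrite Ep all_cat /= Ei => /and3P [].
rewrite (nth_map dflt_tree) -?Hsz //.
case E2: (pop (nth dflt_tree qs i)) => [[y q'']|] // [_ <-].
split.
  by move: Hp; rewrite Ep Ep' !all_cat /= => /and3P [-> _ ->].
apply/wtsP; rewrite size_set_nth -Hsz (maxn_idPr Hi); split => // k Hk.
rewrite nth_set_nth /=; case: eqP => [->|_]; last exact: Hch.
exact: (IH i Hi _ _ _ (Hch i Hi) E2).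
Qed.

Lemma wt_push t (q : ptree) pkt pt r : wt t q -> vpath t pt -> wt t (push q pkt pt r).
Proof.
elim/topo_ind': t q pt => [|ts IH] [p|qs p] [|[i ri] pt] //=.
move=> [Hp Hqs] [Hi Hv]; have /wtsP [Hsz Hch] := Hqs.
split.
  by rewrite /pifo_push -cats1 all_cat Hp /= Hi.
apply/wtsP; rewrite size_set_nth -Hsz (maxn_idPr Hi); split => // k Hk.
rewrite nth_set_nth /=; case: eqP => [->|_]; last exact: Hch.
exact: (IH i Hi _ _ (Hch i Hi) Hv).
Qed.

Lemma lifts_set_nth t2 f ts (qs : seq ptree) i y :
  i < size ts -> size ts = size qs ->
  lifts t2 f ts (set_nth dflt_tree qs i y) 0 =
  set_nth dflt_tree (lifts t2 f ts qs 0) i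
    (lift_tree (nth Star ts i) (subtree t2 (f [:: i]))
       (fun a => drop (size (f [:: i])) (f (i :: a))) y).
Proof.
move=> Hi Hsz; apply: (@eq_from_nth _ dflt_tree).
  rewrite !size_set_nth !size_lifts !size_set_nth -Hsz minnn (maxn_idPr Hi).
  by rewrite minnn.
rewrite size_lifts size_set_nth -Hsz (maxn_idPr Hi) minnn => k Hk.
rewrite nth_lifts ?size_set_nth -?Hsz ?(maxn_idPr Hi) // !nth_set_nth /= add0n.
case: eqP => [->|_] //.
by rewrite nth_lifts -?Hsz.
Qed.

Lemma lift_props t1 : forall t2 f, embedding t1 t2 f -> forall q : ptree, wt t1 q ->
  [/\ wt t2 (lift_tree t1 t2 f q),
      pop (lift_tree t1 t2 f q) =
        omap (fun xq => (xq.1, lift_tree t1 t2 f xq.2)) (pop q)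
    & forall pkt pt r, vpath t1 pt -> exists pt2, vpath t2 pt2 /\
        push (lift_tree t1 t2 f q) pkt pt2 r = lift_tree t1 t2 f (push q pkt pt r)].
Proof.
elim/topo_ind': t1 => [|ts IH] t2 f Hemb.
  have Et2 : t2 = Star.
    by case: Hemb => H0 _ _ Hleaf _; have := Hleaf [::] I erefl; rewrite H0.
  subst t2; move=> [p|//] _ /=; split => //.
    by case: pifo_pop => [[]|].
  by move=> pkt [|[i ri] pt] r //= _; exists [::].
move=> [//|qs p] /[dup] Hwt; rewrite wt_node => -[Hp /wtsP [Hsz Hch]].
have [H0 Ha Hinj Hleaf Hpre] := Hemb.
set fa := mkseq (fun i => f [:: i]) (size ts).
set L := lifts t2 f ts qs 0.
have Hfs : size fa = size ts by rewrite size_mkseq.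
have Hnth : forall k, k < size ts -> nth [::] fa k = f [:: k] by move=> k Hk; rewrite nth_mkseq.
have HL : forall k, k < size ts -> nth dflt_tree L k =
    lift_tree (nth Star ts k) (subtree t2 (f [:: k]))
      (fun a => drop (size (f [:: k])) (f (k :: a))) (nth dflt_tree qs k).
  by move=> k Hk; rewrite nth_lifts -?Hsz.
have IHk : forall k, k < size ts -> _ := fun k Hk => IH k Hk _ _ (sub_emb Hemb Hk) _ (Hch k Hk).
have Hanti : forall i, i < size ts -> forall k, k < size fa ->
    prefix (nth [::] fa k) (nth [::] fa i) -> k = i.
  move=> i Hi k; rewrite Hfs => Hk; rewrite !Hnth // -Hpre //=.
  by case/andP => /eqP.
have Hwt2 : wt t2 (lift_tree (Node ts) t2 f (Internal qs p)).
  rewrite lift_node; apply: BT_wt => k; rewrite Hfs => Hk _.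
  rewrite drop0 Hnth // HL //; split; first exact: Ha.
  by have [] := IHk k Hk.
split => //.
  rewrite lift_node /=; case E: (pifo_pop p) => [[i p']|]; last first.
    rewrite (pifo_pop_none E); apply: BT_none.
    apply/negP => /(nthP [::]) [k]; rewrite Hfs => Hk; rewrite Hnth // => Ek.
    by have := Hinj [:: k] [::] (conj Hk I) I; rewrite Ek H0 => /(_ erefl).
  have [pre [e [post [Ep H1 H2 Ei Ep']]]] := pifo_popP E.
  have Hi : i < size ts by move: Hp; rewrite Ep all_cat /= Ei => /and3P [].
  have Hi' : i < size fa by rewrite Hfs.
  have Hadd : is_addr t2 (drop (size ([::] : seq nat)) (nth [::] fa i)).
    by rewrite drop0 Hnth //; exact: Ha.
  rewrite (BT_pop L Hi' (Hanti i Hi) E (prefix0s _) Hadd).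
  rewrite (nth_map dflt_tree) -?Hsz // HL //.
  have [_ -> _] := IHk i Hi.
  case: (pop (nth dflt_tree qs i)) => [[x q'']|] //=.
  congr (Some (x, _)).
  match goal with |- ?A = _ =>
    change (A = build_tree fa (lifts t2 f ts (set_nth dflt_tree qs i q'') 0) p' t2 [::]) end.
  by rewrite lifts_set_nth.
move=> pkt [|[i ri] pt] r Hv0; first by discriminate Hv0.
case: Hv0 => Hi Hv.
change (push (Internal qs p) pkt ((i, ri) :: pt) r) with
  (Internal (set_nth dflt_tree qs i (push (nth dflt_tree qs i) pkt pt r)) (rcons p (i, ri))).
have [_ _ Hpush] := IHk i Hi.
have [pt2 [Hv2 Ep2]] := Hpush pkt pt r Hv.
exists ([seq (c, ri) | c <- drop (size ([::] : seq nat)) (nth [::] fa i)] ++ pt2); split.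
  by rewrite drop0 Hnth //; apply: vpath_cat => //; exact: Ha.
have Hi' : i < size fa by rewrite Hfs.
have Hadd : is_addr t2 (drop (size ([::] : seq nat)) (nth [::] fa i)).
  by rewrite drop0 Hnth //; exact: Ha.
rewrite lift_node (BT_push L p ri pkt pt2 r Hi' (Hanti i Hi) (prefix0s _) Hadd).
by rewrite HL // Ep2 lift_node lifts_set_nth.
Qed.

End F.

Theorem theorem5p11 (d : Order.disp_t) (Rk : orderType d) (Pkt : Type)
  (t1 t2 : topo) (f : seq nat -> seq nat) (q : @ptree d Rk Pkt) :
  embedding t1 t2 f -> wt t1 q -> simulated t1 t2 q (lift_tree t1 t2 f q).
Proof.
move=> Hemb Hwt.
exists (fun q1 q2 => wt t1 q1 /\ q2 = lift_tree t1 t2 f q1); split; last by split.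
move=> q1 q2 [Hw ->]; have [W P U] := lift_props Hemb Hw.
split => //.
- by rewrite P => ->.
- move=> pkt q1' E; rewrite P E /=; exists (lift_tree t1 t2 f q1'); split => //.
  by split => //; exact: wt_pop Hw E.
- move=> pkt pt1 r1 Hv; have [pt2 [Hv2 E]] := U pkt pt1 r1 Hv.
  exists pt2, r1; split => //; split; first exact: wt_push.
  by rewrite E.
Qed.
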